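(* For every family $(\alpha_k)$ as below, $\mathrm{3SAT}^{\mathrm C}\in\mathrm{P}^*_{\mathrm{lsis}}$.
   Context: $\mathbb B=\{T,F\}$. Let $v_1,v_2,\dots$ be propositional variables. For $k\in\mathbb N$ let $d(k)=\binom{2k}{1}+\binom{2k}{2}+\binom{2k}{3}$, and let $L_k$ be the set of sets $L$ of literals from $\{v_1,\neg v_1,\dots,v_k,\neg v_k\}$ with $1\le |L|\le 3$. Let $(\alpha_k)_{k\in\mathbb N}$ be bijections $\alpha_k:[1,d(k)]\to L_k$ such that (i) for all $i$ and $j\in[1,d(i)]$, $\alpha_{i+1}(j)=\alpha_i(j)$; and (ii) the map $\alpha(i)=\alpha_k(i)$ for the least $k$ with $i\le d(k)$ is polynomial-time computable. For $n\in\mathbb N$ let $k$ be such that $d(k)\le n<d(k+1)$ and define $\mathrm{3SAT}^{\mathrm C}_n:\mathbb B^n\to\mathbb B$ by $\mathrm{3SAT}^{\mathrm C}_n(b_1,\dots,b_n)=T$ iff $\bigwedge_{i\in[1,d(k)],\,b_i=T}\bigvee\alpha_k(i)$ is satisfiable; $\mathrm{3SAT}^{\mathrm C}=(\mathrm{3SAT}^{\mathrm C}_n)_n$. A primitive instruction is one of: a plain basic instruction $a$, a positive test instruction $+a$, a negative test instruction $-a$, a forward jump instruction $\#l$ ($l\in\mathbb N$), or the termination instruction $!$. An instruction sequence is a finite nonempty sequence $X=u_1;\dots;u_k$ of primitive instructions; $|X|=k$. $\mathrm{SIS}_{br}$ is the set of instruction sequences all of whose basic instructions belong to $\{\mathrm{in}{:}i.\mathrm{get}: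 i\ge1\}\cup\{\mathrm{out}.\mathrm{set}{:}T\}\cup\{\mathrm{split}(\mathrm{par}{:}i),\mathrm{reply}(\mathrm{par}{:}i): i\ge1\}$, where $\mathrm{in}{:}i$, $\mathrm{out}$ name Boolean registers and $\mathrm{par}{:}i$ are Boolean parameters. Splitting execution of $X\in\mathrm{SIS}_{br}$ on input $b\in\mathbb B^n$ is a finite tree of branches; each branch has a counter (initially 1) and a partial assignment $\sigma$ of Boolean parameters (initially empty). A branch deadlocks if its counter exceeds $k$, if it reaches $\#0$, if it executes $\mathrm{in}{:}j.\mathrm{get}$ with $j>n$, if it executes $\mathrm{reply}(p)$ with $\sigma(p)$ undefined, or if it executes $\mathrm{split}(p)$ with $\sigma(p)$ defined. At position $i$: $!$ terminates the branch successfully; $\#l$ ($l>0$) moves the counter to $i+l$; for $u_i\in\{a,+a,-a\}$ the basic instruction $a$ yields reply $r$ ($\mathrm{in}{:}j.\mathrm{get}$ yields $b_j$; $\mathrm{out}.\mathrm{set}{:}T$ yields $T$; $\mathrm{reply}(p)$ yields $\sigma(p)$; $\mathrm{split}(p)$ with $\sigma(p)$ undefined replaces the branch by two branches, one with $r=T$ and assignment $\sigma\cup\{p\mapsto T\}$ and one with $r=F$ and assignment $\sigma\cup\{p\mapsto F\}$), and the counter becomes $i+1$ for $a$; for $+a$: $i+1$ if $r=T$, $i+2$ if $r=F$; for $-a$: $i+1$ if $r=F$, $i+2$ if $r=T$. $X$ splitting computes $f:\mathbb B^n\to\mathbb B$ if for every $b\in\mathbb B^n$, every branch terminates successfully, and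 $f(b)=T$ iff some branch executes $\mathrm{out}.\mathrm{set}{:}T$. $\mathrm{P}^*_{\mathrm{lsis}}$ is the class of Boolean function families $(f_n)_{n\in\mathbb N}$, $f_n:\mathbb B^n\to\mathbb B$, for which there is a polynomial $h$ such that for every $n$ some $X\in\mathrm{SIS}_{br}$ splitting computes $f_n$ with $|X|\le h(n)$. *)

(* Defs.v *)
From Stdlib Require Import ClassicalEpsilon.
From mathcomp Require Import all_boot.
Unset Printing Implicit Defensive.

Inductive basic :=
| In_get of nat
| Out_setT
| Split of nat
| Reply of nat.

Inductive prim :=
| Plain of basic
| PTest of basic
| NTest of basic
| Jump of nat
| Term.

Definition basic_ok (a : basic) : bool :=
  match a with
  | In_get i => 0 < i
  | Out_setT => true
  | Split i => 0 < i
  | Reply i => 0 < i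
  end.

Definition prim_ok (u : prim) : bool :=
  match u with
  | Plain a | PTest a | NTest a => basic_ok a
  | _ => true
  end.

(* X is an element of SIS_br: nonempty, all basic instructions from the
   allowed set (with indices i >= 1). Position i (1-based) of X is nth _ X i.-1. *)
Definition is_SIS_br (X : seq prim) : bool := (0 < size X) && all prim_ok X.

Definition assign := nat -> option bool.
Definition upd (s : assign) (p : nat) (r : bool) : assign :=
  fun q => if q == p then Some r else s q.

Definition next_pos (u : prim) (i : nat) (r : bool) : nat :=
  match u with
  | PTest _ => if r then i.+1 else i.+2
  | NTest _ => if r then i.+2 else i.+1
  | _ => i.+1
  end.

(* Splitting execution of X on input b (b_j = nth false b j.-1, n = size b),
   starting from the branch at counter i with partial assignment s, where
   [out] records whether out.set:T has already been executed on this branch.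
   Result: None  = some branch of the (sub)tree deadlocks (or fuel ran out);
           Some o = every branch terminates successfully, and o holds iff
                    some branch executes out.set:T. *)
Fixpoint exec (X : seq prim) (b : seq bool) (fuel i : nat) (s : assign)
         (out : bool) : option bool :=
  match fuel with
  | 0 => None
  | fuel'.+1 =>
    if (i == 0) || (size X < i) then None else
    let u := nth Term X i.-1 in
    let step (a : basic) :=
      match a with
      | In_get j =>
          if (0 < j) && (j <= size b)
          then exec X b fuel' (next_pos u i (nth false b j.-1)) s out
          else None
      | Out_setT => exec X b fuel' (next_pos u i true) s true
      | Reply p =>
          match s p with
          | Some r => exec X b fuel' (next_pos u i r) s out
          | None => None
          end
      | Split p =>
          match s p with
          | Some _ => None
          | None =>
              match exec X b fuel' (next_pos u i true) (upd s p true) out,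
                    exec X b fuel' (next_pos u i false) (upd s p false) out with
              | Some o1, Some o2 => Some (o1 || o2)
              | _, _ => None
              end
          end
      end in
    match u with
    | Term => Some out
    | Jump l => if l == 0 then None else exec X b fuel' (i + l) s out
    | Plain a => step a
    | PTest a => step a
    | NTest a => step a
    end
  end.

(* The counter strictly increases, so fuel |X|+1 is never exhausted. *)
Definition splitting_computes (X : seq prim) (n : nat)
           (f : n.-tuple bool -> bool) : Prop :=
  forall b : n.-tuple bool,
    exec X b (size X).+1 1 (fun _ => None) false = Some (f b).

(* Polynomials (with natural coefficients, w.l.o.g. for upper bounds). *)
Definition is_poly_nat (h : nat -> nat) : Prop :=
  exists cs : seq nat, forall n, h n = \sum_(i < size cs) nth 0 cs i * n ^ i.

Definition P_star_lsis (F : forall n : nat, n.-tuple bool -> bool) : Prop :=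
  exists h : nat -> nat, is_poly_nat h /\
    forall n : nat, exists X : seq prim,
      [/\ is_SIS_br X, splitting_computes X n (F n) & size X <= h n].

(* A literal (x, true) is v_x, (x, false) is ~ v_x.
   A clause (set of literals) is represented by a seq, up to =i. *)
Definition literal := (nat * bool)%type.
Definition clause := seq literal.

Definition dd (k : nat) : nat := 'C(2 * k, 1) + 'C(2 * k, 2) + 'C(2 * k, 3).

Definition in_Lk (k : nat) (L : clause) : Prop :=
  (all (fun l : literal => (0 < l.1) && (l.1 <= k)) L) /\
  (1 <= size (undup L) <= 3).

Definition alpha_family (alpha : nat -> nat -> clause) : Prop :=
  (forall k,
     (forall j, 1 <= j <= dd k -> in_Lk k (alpha k j)) /\
     (forall j1 j2, 1 <= j1 <= dd k -> 1 <= j2 <= dd k ->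
        alpha k j1 =i alpha k j2 -> j1 = j2) /\
     (forall L, in_Lk k L -> exists2 j, 1 <= j <= dd k & alpha k j =i L)) /\
  (forall i j, 1 <= j <= dd i -> alpha i.+1 j =i alpha i j).

(* The unique k with d(k) <= n < d(k+1). *)
Definition kof (n : nat) : nat := \max_(k < n.+1 | dd k <= n) k.

Definition lit_true (v : nat -> bool) (l : literal) : bool := v l.1 == l.2.

Definition clause_true (v : nat -> bool) (L : clause) : bool := has (lit_true v) L.

Definition threeSATC_prop (alpha : nat -> nat -> clause) (n : nat)
           (b : n.-tuple bool) : Prop :=
  let k := kof n in
  exists v : nat -> bool,
    forall i, 1 <= i <= dd k -> nth false (val b) (i.-1) -> clause_true v (alpha k i).

Definition threeSATC (alpha : nat -> nat -> clause) (n : nat)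
           (b : n.-tuple bool) : bool :=
  if excluded_middle_informative (threeSATC_prop alpha n b) then true else false.

(* Main.v *)
Require Import Defs.
From Stdlib Require Import ClassicalEpsilon FunctionalExtensionality Lia.
From mathcomp Require Import all_boot.

Ltac nlia := repeat match goal with
 | H : is_true (_ && _) |- _ => let H1 := fresh H in let H2 := fresh H in case/andP: H => H1 H2
 | |- is_true (_ && _) => apply/andP; split
 | H : is_true (_ <= _) |- _ => move/leP: H => H
 | H : is_true (_ < _) |- _ => move/ltP: H => H
 | H : context [addn] |- _ => rewrite -plusE in H
 | H : context [subn] |- _ => rewrite -minusE in H
 | H : context [muln] |- _ => rewrite -multE in H
 | |- is_true (_ <= _) => apply/leP
 | |- is_true (_ < _) => apply/ltP
 | |- context [addn] => rewrite -plusE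
 | |- context [subn] => rewrite -minusE
 | |- context [muln] => rewrite -multE
 end; lia.

Lemma ltn_next u i r : i < next_pos u i r.
Proof. by case: u => //= *; case: r. Qed.

Lemma exec_fuel X b : forall f1 f2 i s out, size X < f1 + i -> size X < f2 + i ->
  exec X b f1 i s out = exec X b f2 i s out.
Proof.
elim=> [|f1 IH] [|f2] i s out H1 H2 //=.
- by rewrite add0n in H1; rewrite H1 orbT.
- by rewrite add0n in H2; rewrite H2 orbT.
- case: ifP => // Hi.
  have E : forall j s' o, i < j -> exec X b f1 j s' o = exec X b f2 j s' o.
    by move=> j s' o Hj; apply: IH; nlia.
  case: (nth Term X i.-1) => [a|a|a|l|] //.
  all: try (case: a => [j||p|p] //=).
  all: try (case: ifP => // _; rewrite E //; apply: ltn_next).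
  all: try (rewrite E //; apply: ltn_next).
  all: try (case: (s p) => // r; rewrite E //; apply: ltn_next).
  all: try (case: (s p) => //; rewrite !E //; apply: ltn_next).
  all: try (case: eqP => // Hl; rewrite E //; nlia).
  all: try (case: ifP => // _; case: (nth false b j.-1); rewrite E //).
  all: try (case: (s p) => // -[]; rewrite E //).
Qed.

Definition run X b i s out := exec X b (size X).+1 i s out.
Arguments run : simpl never.

Lemma exec_run X b f i s out : size X < f + i -> exec X b f i s out = run X b i s out.
Proof. by move=> H; apply: exec_fuel => //; nlia. Qed.

Lemma nth_at (P : seq prim) u R : nth Term (P ++ u :: R) (size P) = u.
Proof. by rewrite nth_cat ltnn subnn. Qed.

Lemma unf X b P u R s out : X = P ++ u :: R ->
  run X b (size P).+1 s out =
  let step (a : basic) :=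
      match a with
      | In_get j =>
          if (0 < j) && (j <= size b)
          then run X b (next_pos u (size P).+1 (nth false b j.-1)) s out
          else None
      | Out_setT => run X b (next_pos u (size P).+1 true) s true
      | Reply p =>
          match s p with
          | Some r => run X b (next_pos u (size P).+1 r) s out
          | None => None
          end
      | Defs.Split p =>
          match s p with
          | Some _ => None
          | None =>
              match run X b (next_pos u (size P).+1 true) (upd s p true) out,
                    run X b (next_pos u (size P).+1 false) (upd s p false) out with
              | Some o1, Some o2 => Some (o1 || o2)
              | _, _ => None
              end
          end
      end in
    match u with
    | Term => Some out
    | Jump l => if l == 0 then None else run X b ((size P).+1 + l) s out
    | Plain a => step a
    | PTest a => step a
    | NTest a => step a
    end.
Proof.
move=> HX; rewrite {1}/run [exec _ _ (size X).+1 _ _ _]/=.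
have Hs : size X = size P + (size R).+1 by rewrite HX size_cat.
have -> : size X < (size P).+1 = false by apply/negbTE; rewrite -leqNgt; nlia.
have -> : nth Term X (size P) = u by rewrite HX nth_at.
have E : forall j s' o, size P < j -> exec X b (size X) j s' o = run X b j s' o.
  by move=> j s' o Hj; apply: exec_run; nlia.
case: u HX => [a|a|a|l|] _ //=.
all: try (case: a => [j||p|p] //=).
all: try (case: ifP => // _; rewrite E //; case: (nth false b j.-1)).
all: try (rewrite E //).
all: try (case: (s p) => // -[]; rewrite E //).
all: try (case: (s p) => //; rewrite !E //).
all: try (case: eqP => // _; rewrite E //; nlia).
all: nlia.
Qed.

Lemma run_jump X b P l R s out : X = P ++ Jump l :: R -> 0 < l ->
  run X b (size P).+1 s out = run X b ((size P).+1 + l) s out.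
Proof. by move=> HX Hl; rewrite (unf _ _ _ _ _ _ _ HX) /=; case: eqP => // Hl0; rewrite Hl0 in Hl. Qed.

Lemma run_term X b P R s out : X = P ++ Term :: R -> run X b (size P).+1 s out = Some out.
Proof. by move=> HX; rewrite (unf _ _ _ _ _ _ _ HX). Qed.

Lemma run_out X b P R s out : X = P ++ Plain Out_setT :: R ->
  run X b (size P).+1 s out = run X b (size P).+2 s true.
Proof. by move=> HX; rewrite (unf _ _ _ _ _ _ _ HX). Qed.

Lemma run_in X b P j R s out : X = P ++ NTest (In_get j) :: R -> 0 < j <= size b ->
  run X b (size P).+1 s out =
  if nth false b j.-1 then run X b (size P).+3 s out else run X b (size P).+2 s out.
Proof. by move=> HX Hj; rewrite (unf _ _ _ _ _ _ _ HX) /= Hj; case: (nth false b j.-1). Qed.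

Lemma run_split X b P p R s out : X = P ++ Plain (Defs.Split p) :: R -> s p = None ->
  run X b (size P).+1 s out =
  match run X b (size P).+2 (upd s p true) out, run X b (size P).+2 (upd s p false) out with
  | Some o1, Some o2 => Some (o1 || o2)
  | _, _ => None
  end.
Proof. by move=> HX Hp; rewrite (unf _ _ _ _ _ _ _ HX) /= Hp. Qed.

Definition lit_instr (l : literal) : prim :=
  if l.2 then PTest (Reply l.1) else NTest (Reply l.1).

Lemma run_lit X b P l R s out r : X = P ++ lit_instr l :: R -> s l.1 = Some r ->
  run X b (size P).+1 s out =
  if r == l.2 then run X b (size P).+2 s out else run X b (size P).+3 s out.
Proof.
rewrite /lit_instr; case: (l.2) => HX Hr; rewrite (unf _ _ _ _ _ _ _ HX) /= Hr; by case: r {Hr}.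
Qed.

Fixpoint lits (c : clause) : seq prim :=
  match c with
  | [::] => [::]
  | l :: c' => lit_instr l :: Jump (2 * size c' + 2) :: lits c'
  end.

Lemma size_lits c : size (lits c) = 2 * size c.
Proof. by elim: c => //= l c ->; nlia. Qed.

Definition block (i : nat) (c : clause) (f : nat) : seq prim :=
  NTest (In_get i) :: Jump (2 * size c + 2) :: lits c ++ [:: Jump f.+1].

Lemma size_block i c f : size (block i c f) = 3 + 2 * size c.
Proof. rewrite /block /= size_cat size_lits /=; nlia. Qed.

Fixpoint tcode (cs : seq (nat * clause)) : seq prim :=
  match cs with
  | [::] => [:: Plain Out_setT; Term; Term]
  | ic :: cs' => block ic.1 ic.2 (size (tcode cs')).-1 ++ tcode cs'
  end.

Lemma tcode_last cs : exists Q, tcode cs = Q ++ [:: Term].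
Proof.
elim: cs => [|ic cs [Q HQ]] /=; first by exists [:: Plain Out_setT; Term].
by exists (block ic.1 ic.2 (size (tcode cs)).-1 ++ Q); rewrite HQ catA.
Qed.

Lemma size_tcode cs : 3 <= size (tcode cs).
Proof. case: cs => // ic cs. rewrite /tcode -/tcode size_cat size_block; nlia. Qed.

Definition litsat (s : assign) (l : literal) : bool := s l.1 == Some l.2.

Lemma run_lits X b P c R s out : X = P ++ lits c ++ R ->
  (forall l, l \in c -> s l.1 != None) ->
  run X b (size P).+1 s out =
  if has (litsat s) c then run X b (size P + 2 * size c).+2 s out
  else run X b (size P + 2 * size c).+1 s out.
Proof.
elim: c P => [|l c IH] P HX Hc /=; first by rewrite muln0 addn0.
have : s l.1 != None by apply: Hc; rewrite inE eqxx.
case Hr: (s l.1) => [r|] // _.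
rewrite (run_lit _ _ _ _ _ _ _ _ HX Hr) /litsat Hr.
case: eqP => [-> | Hne] /=.
  rewrite eqxx /=.
  have HX' : X = (rcons P (lit_instr l)) ++ Jump (2 * size c + 2) :: (lits c ++ R).
    by rewrite HX cat_rcons.
  rewrite -(size_rcons P (lit_instr l)) (run_jump _ _ _ _ _ _ _ HX') //; last nlia.
  congr run; rewrite size_rcons; nlia.
have -> : (Some r == Some l.2) = false by apply/eqP => -[].
have HX' : X = (P ++ [:: lit_instr l; Jump (2 * size c + 2)]) ++ lits c ++ R.
  by rewrite HX -catA.
rewrite /= in IH.
have -> : (size P).+3 = (size (P ++ [:: lit_instr l; Jump (2 * size c + 2)])).+1.
  by rewrite size_cat /=; nlia.
rewrite (IH _ HX'); last by move=> l' Hl'; apply: Hc; rewrite inE Hl' orbT.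
rewrite /litsat size_cat /=.
have -> : size P + 2 + 2 * size c = size P + 2 * (size c).+1 by nlia.
done.
Qed.

Definition check (b : seq bool) (cs : seq (nat * clause)) (s : assign) : bool :=
  all (fun ic => nth false b ic.1.-1 ==> has (litsat s) ic.2) cs.

Lemma run_tcode X b P cs s : X = P ++ tcode cs ->
  (forall ic, ic \in cs -> (0 < ic.1 <= size b) && all (fun l => s l.1 != None) ic.2) ->
  run X b (size P).+1 s false = Some (check b cs s).
Proof.
elim: cs P => [|[i c] cs IH] P HX Hcs.
  rewrite (run_out _ _ _ _ _ _ HX).
  have HX' : X = rcons P (Plain Out_setT) ++ Term :: [:: Term] by rewrite HX cat_rcons.
  by rewrite -(size_rcons P (Plain Out_setT)) (run_term _ _ _ _ _ _ HX').
have /andP [Hi Hc] := Hcs _ (mem_head _ _).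
have Hcs' : forall ic, ic \in cs -> (0 < ic.1 <= size b) && all (fun l => s l.1 != None) ic.2.
  by move=> ic Hic; apply: Hcs; rewrite inE Hic orbT.
set f := (size (tcode cs)).-1.
have Hf : f.+1 = size (tcode cs) by rewrite /f prednK //; apply: leq_trans (size_tcode cs).
have HXn : X = (P ++ block i c f) ++ tcode cs by rewrite HX catA.
have Hnext : run X b (size (P ++ block i c f)).+1 s false = Some (check b cs s)
  by apply: IH.
rewrite size_cat size_block in Hnext.
rewrite /check /= -/(check b cs s).
have HX1 : X = P ++ NTest (In_get i) :: (Jump (2 * size c + 2) :: lits c ++ [:: Jump f.+1] ++ tcode cs).
  by rewrite HX /= /block /= -catA.
rewrite (run_in _ _ _ _ _ _ _ HX1 Hi).
case: (nth false b i.-1) => /=.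
  have HX2 : X = (P ++ [:: NTest (In_get i); Jump (2 * size c + 2)]) ++ lits c ++ (Jump f.+1 :: tcode cs).
    by rewrite HX1 -catA.
  have -> : (size P).+3 = (size (P ++ [:: NTest (In_get i); Jump (2 * size c + 2)])).+1
    by rewrite size_cat /=; nlia.
  rewrite (run_lits _ _ _ _ _ _ _ HX2); last by move=> l Hl; apply: (allP Hc).
  case: (has (litsat s) c).
    rewrite size_cat /=.
    have -> : (size P + 2 + 2 * size c).+2 = (size P + (3 + 2 * size c)).+1 by nlia.
    by rewrite Hnext.
  have HX3 : X = ((P ++ [:: NTest (In_get i); Jump (2 * size c + 2)]) ++ lits c) ++ Jump f.+1 :: tcode cs.
    by rewrite HX2 catA.
  have -> : (size (P ++ [:: NTest (In_get i); Jump (2 * size c + 2)]) + 2 * size c).+1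
     = (size ((P ++ [:: NTest (In_get i); Jump (2 * size c + 2)]) ++ lits c)).+1
    by rewrite [in RHS]size_cat size_lits.
  rewrite (run_jump _ _ _ _ _ _ _ HX3) //.
  have [Q HQ] := tcode_last cs.
  have HX4 : X = (P ++ block i c f ++ Q) ++ Term :: [::] by rewrite HXn HQ !catA.
  have -> : (size (((P ++ [:: NTest (In_get i); Jump (2 * size c + 2)]) ++ lits c))).+1 + f.+1
     = (size (P ++ block i c f ++ Q)).+1.
    rewrite !size_cat size_lits size_block Hf HQ size_cat /=; nlia.
  by rewrite (run_term _ _ _ _ _ _ HX4).
have HX2 : X = (P ++ [:: NTest (In_get i)]) ++ Jump (2 * size c + 2) :: (lits c ++ [:: Jump f.+1] ++ tcode cs).
  by rewrite HX1 -catA.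
have -> : (size P).+2 = (size (P ++ [:: NTest (In_get i)])).+1 by rewrite size_cat /= addn1.
rewrite (run_jump _ _ _ _ _ _ _ HX2) //; last nlia.
rewrite size_cat /=.
have -> : (size P + 1).+1 + (2 * size c + 2) = (size P + (3 + 2 * size c)).+1 by nlia.
by rewrite Hnext.
Qed.

Definition splits_from p m := [seq Plain (Defs.Split q) | q <- iota p m].

Fixpoint sat_rec b cs m p s : bool :=
  match m with
  | 0 => check b cs s
  | m'.+1 => sat_rec b cs m' p.+1 (upd s p true) || sat_rec b cs m' p.+1 (upd s p false)
  end.

Lemma run_splits X b cs m : forall P s, X = P ++ splits_from (size P).+1 m ++ tcode cs ->
  (forall q, size P < q -> s q = None) -> (forall q, 0 < q <= size P -> s q != None) ->
  (forall ic, ic \in cs -> (0 < ic.1 <= size b) && all (fun l => 0 < l.1 <= size P + m) ic.2) ->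
  run X b (size P).+1 s false = Some (sat_rec b cs m (size P).+1 s).
Proof.
elim: m => [|m IH] P s HX Hn Hd Hcs /=.
  apply: run_tcode => // ic Hic; have /andP [-> Ha] := Hcs _ Hic => /=.
  apply/allP => l Hl; have := allP Ha l Hl; rewrite addn0 => Hl'; exact: Hd.
have HX1 : X = P ++ Plain (Defs.Split (size P).+1) :: (splits_from (size P).+2 m ++ tcode cs) by [].
rewrite (run_split _ _ _ _ _ _ _ HX1 (Hn _ (ltnSn _))).
have HX2 : X = rcons P (Plain (Defs.Split (size P).+1)) ++
   splits_from (size (rcons P (Plain (Defs.Split (size P).+1)))).+1 m ++ tcode cs.
  by rewrite HX1 cat_rcons size_rcons.
have H : forall r, run X b (size P).+2 (upd s (size P).+1 r) false =
   Some (sat_rec b cs m (size P).+2 (upd s (size P).+1 r)).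
  move=> r; have := IH _ (upd s (size P).+1 r) HX2; rewrite size_rcons; apply.
  - move=> q Hq; rewrite /upd; case: eqP => [Eq|_]; first by rewrite Eq ltnn in Hq.
    by apply: Hn; nlia.
  - move=> q Hq; rewrite /upd; case: ifP => // /eqP Hne; apply: Hd; nlia.
  - move=> ic Hic; have /andP [-> Ha] := Hcs _ Hic => /=.
    apply/allP => l Hl; have := allP Ha l Hl; move=> Hl1. case/andP: Hl1 => A B. apply/andP; split =>//. by rewrite addSn -addnS.
by rewrite !H.
Qed.

Definition ext (s : assign) p m (w : nat -> bool) : assign :=
  fun q => if (p <= q) && (q < p + m) then Some (w q) else s q.

Lemma ext0 s p w : ext s p 0 w = s.
Proof.
apply: functional_extensionality => q; rewrite /ext addn0.
by case: leqP => //= H; rewrite ltnNge H.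
Qed.

Lemma ext_upd s p r m w :
  ext (upd s p r) p.+1 m w = ext s p m.+1 (fun q => if q == p then r else w q).
Proof.
apply: functional_extensionality => q; rewrite /ext /upd.
case: (ltngtP q p) => [H|H|->] //=.
- by rewrite addSnnS.
- by rewrite addnS ltnS leq_addr.
Qed.

Lemma sat_rec_iff b cs m : forall p s,
  sat_rec b cs m p s <-> exists w, check b cs (ext s p m w).
Proof.
elim: m => [|m IH] p s /=.
  split; first by move=> H; exists (fun _ => false); rewrite ext0.
  by case=> w; rewrite ext0.
split.
  case/orP => /IH [w Hw]; rewrite ext_upd in Hw; eexists; exact: Hw.
case=> w Hw; apply/orP.
have Ew : (fun q => if q == p then w p else w q) = w.
  by apply: functional_extensionality => q; case: eqP => // ->.
case Hp: (w p); [left|right]; apply/IH; exists w; rewrite ext_upd -Hp Ew //.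
Qed.

Lemma kof_dd n : dd (kof n) <= n.
Proof.
rewrite /kof; apply: (big_ind (fun m => dd m <= n)) => //.
by move=> x y Hx Hy; rewrite /maxn; case: ifP.
Qed.

Lemma kof_le n : kof n <= n.
Proof.
rewrite /kof; apply: (big_ind (fun m => m <= n)) => //.
  by move=> x y Hx Hy; rewrite geq_max Hx Hy.
by move=> i _; rewrite -ltnS.
Qed.

Lemma size_tcode_le cs : (forall ic, ic \in cs -> size ic.2 <= 3) ->
  size (tcode cs) <= 3 + 9 * size cs.
Proof.
elim: cs => [|ic cs IH] // H.
rewrite /tcode -/tcode size_cat size_block /=.
have H1 := H _ (mem_head _ _).
have H2 : size (tcode cs) <= 3 + 9 * size cs by apply: IH => ic' Hic; apply: H; rewrite inE Hic orbT.
move: H1 H2; set x := size ic.2; set y := size (tcode cs); set z := size cs; move=> H1 H2; nlia.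
Qed.

Lemma prim_lits c : all (fun l : literal => 0 < l.1) c -> all prim_ok (lits c).
Proof. by elim: c => //= l c IH /andP [Hl Hc]; rewrite IH // /lit_instr; case: (l.2) => /=; rewrite Hl. Qed.

Lemma prim_tcode cs : (forall ic, ic \in cs -> (0 < ic.1) && all (fun l : literal => 0 < l.1) ic.2) ->
  all prim_ok (tcode cs).
Proof.
elim: cs => [|ic cs IH] // H.
have /andP [H1 H2] := H _ (mem_head _ _).
rewrite /tcode -/tcode all_cat IH; last by move=> ic' Hic; apply: H; rewrite inE Hic orbT.
by rewrite /block /= H1 all_cat prim_lits.
Qed.

Lemma check_iff (alpha : nat -> nat -> clause) k D b w :
  (forall i, 1 <= i <= D -> all (fun l : literal => (0 < l.1) && (l.1 <= k)) (alpha k i)) ->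
  check b [seq (i, undup (alpha k i)) | i <- iota 1 D] (ext (fun _ => None) 1 k w) <->
  (forall i, 1 <= i <= D -> nth false b i.-1 -> clause_true w (alpha k i)).
Proof.
move=> Hlit.
have Heq : forall i, 1 <= i <= D ->
    has (litsat (ext (fun _ => None) 1 k w)) (undup (alpha k i)) = clause_true w (alpha k i).
  move=> i Hi; rewrite has_undup /clause_true; apply: eq_in_has => l Hl.
  have /andP [A B] := allP (Hlit i Hi) l Hl.
  by rewrite /litsat /ext A /= add1n ltnS B.
rewrite /check all_map; split.
  move/allP => H i Hi Hb.
  have := H i; rewrite mem_iota /= Hb Heq //; apply; rewrite add1n ltnS; exact: Hi.
move=> H; apply/allP => i; rewrite mem_iota add1n ltnS => Hi /=.
by apply/implyP => Hb; rewrite Heq //; apply: H.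
Qed.

Theorem theorem10 (alpha : nat -> nat -> clause) :
  alpha_family alpha -> P_star_lsis (threeSATC alpha).
Proof.
move=> [Hal _].
exists (fun n => 3 + 10 * n); split.
  exists [:: 3; 10] => n.
  by rewrite big_ord_recr big_ord_recr big_ord0 /= expn0 expn1 muln1 add0n.
move=> n.
set k := kof n. set D := dd k.
set cs := [seq (i, undup (alpha k i)) | i <- iota 1 D].
have HD : D <= n by apply: kof_dd.
have Hk : k <= n by apply: kof_le.
have [HL _] := Hal k.
have Hlit : forall i, 1 <= i <= D -> all (fun l : literal => (0 < l.1) && (l.1 <= k)) (alpha k i).
  by move=> i Hi; have [] := HL i Hi.
have Hsz : forall i, 1 <= i <= D -> size (undup (alpha k i)) <= 3.
  by move=> i Hi; have [_ /andP []] := HL i Hi.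
have Hcs : forall ic, ic \in cs -> exists2 i, 1 <= i <= D & ic = (i, undup (alpha k i)).
  move=> ic /mapP [i Hi ->]; exists i => //; move: Hi; rewrite mem_iota add1n ltnS.
  done.
exists (splits_from 1 k ++ tcode cs); split.
- rewrite /is_SIS_br size_cat all_cat; apply/andP; split.
    by have := size_tcode cs; case: (size (tcode cs)) => // m _; rewrite addnS.
  apply/andP; split.
    by rewrite /splits_from all_map; apply/allP => q; rewrite mem_iota /= => /andP [].
  apply: prim_tcode => ic /Hcs [i Hi ->] /=.
  have /andP [-> _] := Hi; apply/allP => l; rewrite mem_undup => Hl.
  by have /andP [] := allP (Hlit i Hi) l Hl.
- move=> b.
  have Hb : size b = n by rewrite size_tuple.
  have := @run_splits (splits_from 1 k ++ tcode cs) b cs k [::] (fun _ => None).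
  rewrite /run => ->; first last.
  + move=> ic /Hcs [i Hi ->] /=; apply/andP; split.
      by rewrite Hb; have /andP [A B] := Hi; rewrite A (leq_trans B HD).
    apply/allP => l; rewrite mem_undup add0n => Hl.
    exact: allP (Hlit i Hi) l Hl.
  + by move=> q /andP [A B]; move: B; rewrite leqNgt A.
  + by [].
  + by [].
  congr Some; rewrite /threeSATC.
  case: excluded_middle_informative => H.
    apply/sat_rec_iff; case: H => v Hv; exists v; apply/check_iff => //.
  apply/negbTE/negP => /sat_rec_iff [w Hw]; apply: H; exists w.
  exact: (proj1 (check_iff alpha k D b w Hlit) Hw).
- rewrite size_cat size_map size_iota.
  have := size_tcode_le cs.
  rewrite /cs size_map size_iota => H.
  have : size (tcode cs) <= 3 + 9 * D.
    by apply: H => ic /Hcs [i Hi ->] /=; apply: Hsz.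
  move: HD Hk; set t := size (tcode cs) => HD Hk Ht; nlia.
Qed.
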